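(* Let $n>1$, $Q=\{1,2,\dots,n\}$, and for $k=1,2,\dots,n$ let $$B_{n,k}=\{t:Q\to Q \mid it>i \text{ for all } 1\le i<k,\ \text{and } it=k \text{ for all } i\ge k\}.$$ Let $B_n=\bigcup_{k=1}^n B_{n,k}$. Then $B_n$ is a semigroup under composition, every element of $B_n$ is non-permutational, $|B_n|=\lfloor e\cdot (n-1)!\rfloor$, and $B_n$ is maximal in the following sense: for every non-permutational transformation $t$ of $Q$ with $t\notin B_n$, the semigroup generated by $B_n\cup\{t\}$ contains a permutational transformation.
   Context: A transformation of $Q$ is a map $t:Q\to Q$; $it$ denotes the image of $i$, and composition is written left to right: $i(t_1t_2)=(it_1)t_2$. A transformation $t$ of $Q$ is permutational if there exists $X\subseteq Q$ with $|X|\ge 2$ such that $Xt\subseteq X$ and the restriction of $t$ to $X$ is a bijection of $X$ onto itself; otherwise $t$ is non-permutational. Here $e$ is Euler's number. *)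

(* Defs.v *)
From HB Require Import structures.
From mathcomp Require Import all_boot all_order all_algebra.
From mathcomp Require Import all_classical all_reals all_analysis.
Set Implicit Arguments. Unset Strict Implicit. Unset Printing Implicit Defensive.
Import Order.TTheory GRing.Theory Num.Theory.

(* Q = {1,...,n} is modelled as 'I_n = {0,...,n-1}
   (element i of 'I_n stands for i+1 of Q). *)

Definition transf (n : nat) := {ffun 'I_n -> 'I_n}.

(* left-to-right composition: i (t1 t2) = (i t1) t2 *)
Definition tmul n (t1 t2 : transf n) : transf n := [ffun i => t2 (t1 i)].

Definition permutational n (t : transf n) : Prop :=
  exists X : {set 'I_n},
    [/\ 1 < #|X|,
        (forall x, x \in X -> t x \in X),
        {in X &, injective t}
      & (forall y, y \in X -> exists2 x, x \in X & t x = y)].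

(* B_{n,k} (0-indexed k): i t > i for i < k, and i t = k for i >= k *)
Definition Bnk n (k : 'I_n) : {set transf n} :=
  [set t : transf n | [forall i : 'I_n, if (i < k)%N then (i < t i)%N else t i == k]].

Definition Bn n : {set transf n} := \bigcup_(k : 'I_n) Bnk k.

Inductive sgen n (S : {set transf n}) : transf n -> Prop :=
| sgen_base t : t \in S -> sgen S t
| sgen_mul t1 t2 : sgen S t1 -> sgen S t2 -> sgen S (tmul t1 t2).

(* Main.v *)
Require Import Defs.
From HB Require Import structures.
From mathcomp Require Import all_boot all_order all_algebra.
From mathcomp Require Import all_classical all_reals all_analysis.
From mathcomp Require Import zify.
From mathcomp.algebra_tactics Require Import ring lra.
Import Order.TTheory GRing.Theory Num.Theory.

Module Aux.
Set Implicit Arguments. Unset Strict Implicit. Unset Printing Implicit Defensive.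
Lemma BnkP n (k : 'I_n) (t : transf n) :
  reflect (forall i : 'I_n, if (i < k)%N then (i < t i)%N else t i == k) (t \in Bnk k).
Proof. by rewrite inE; apply: forallP. Qed.

Lemma Bnk_uniq n (k k' : 'I_n) (t : transf n) : t \in Bnk k -> t \in Bnk k' -> k = k'.
Proof.
move=> /BnkP h /BnkP h'.
have hk := h k; have hk' := h' k'; rewrite ltnn /= in hk; rewrite ltnn /= in hk'.
move/eqP: hk => hk; move/eqP: hk' => hk'.
apply/val_inj/eqP; rewrite eqn_leq; apply/andP; split; rewrite leqNgt; apply/negP => lt.
- by have := h k'; rewrite lt hk' ltnn.
- by have := h' k; rewrite lt hk ltnn.
Qed.

Lemma card_gt n (i : 'I_n) : #|[pred j : 'I_n | (i < j)%N]| = n - i.+1.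
Proof.
rewrite -sum1_card.
have -> : \sum_(j in [pred j : 'I_n | (i < j)%N]) 1 = \sum_(j < n | xpredT (j : nat) && (i.+1 <= j)%N) 1 by apply: eq_bigl.
have E := (@big_geq_mkord _ _ addn i.+1 n xpredT (fun _ => 1%N)). rewrite -E.
by rewrite big_mkcond /= sum_nat_const_nat muln1.
Qed.

Lemma card_Bnk n (k : 'I_n) : #|Bnk k| = n.-1 ^_ k.
Proof.
pose F (i : 'I_n) := [pred j : 'I_n | if (i < k)%N then (i < j)%N else j == k].
have -> : #|Bnk k| = #|(family F : simpl_pred (transf n))|.
  apply: eq_card => t; rewrite inE; apply/forallP/familyP => h i; exact: h i.
rewrite card_family foldrE big_map big_enum /=.
rewrite ffact_prod (big_ord_widen n (fun i => n.-1 - i)) ?(ltnW (ltn_ord k)) //.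
rewrite [LHS]big_mkcond [RHS]big_mkcond; apply: eq_bigr => i _ /=; case: ifP => h.
  rewrite card_gt; lia.
by rewrite (@eq_card _ _ (pred1 k)) ?card1 // => j; rewrite !inE.
Qed.

Lemma card_Bn n : #|Bn n| = \sum_(k < n) n.-1 ^_ k.
Proof.
transitivity (\sum_(t : transf n) \sum_(k < n) (t \in Bnk k : nat)).
  rewrite -sum1_card big_mkcond /=; apply: eq_bigr => t _.
  case: ifP => h.
    move: h => /bigcupP [k _ hk].
    rewrite (bigD1 k) //= hk big1 // => k' hk'.
    case hk2: (t \in Bnk k') => //; have := Bnk_uniq hk hk2; move/eqP: hk'; congruence.
  rewrite big1 // => k _; case hk: (t \in Bnk k) => //; exfalso.
  by move/negP: h; apply; apply/bigcupP; exists k.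
rewrite exchange_big /=; apply: eq_bigr => k _.
by rewrite -card_Bnk -sum1_card [RHS]big_mkcond; apply: eq_bigr => i _; case: (i \in Bnk k).
Qed.
Section Comb.
Variable n : nat.
Implicit Types (t s u : transf n) (k : 'I_n).

Lemma Bnk_lt k t : t \in Bnk k -> forall i : 'I_n, (i < k)%N -> (i < t i)%N.
Proof. by move=> /BnkP h i hi; have := h i; rewrite hi. Qed.

Lemma Bnk_ge k t : t \in Bnk k -> forall i : 'I_n, (k <= i)%N -> t i = k.
Proof. by move=> /BnkP h i hi; have := h i; rewrite ltnNge hi /= => /eqP. Qed.

Lemma Bnk_intro k t : (forall i : 'I_n, (i < k)%N -> (i < t i)%N) ->
  (forall i : 'I_n, (k <= i)%N -> t i = k) -> t \in Bnk k.
Proof.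
move=> h1 h2; apply/BnkP => i; case: ifP => hi; first exact: h1.
by rewrite h2 // leqNgt hi.
Qed.

Lemma BnP t : reflect (exists k, t \in Bnk k) (t \in Bn n).
Proof.
apply: (iffP bigcupP) => [[k _ h]|[k h]]; by exists k.
Qed.

Lemma part1 s t : s \in Bn n -> t \in Bn n -> tmul s t \in Bn n.
Proof.
move=> /BnP [k hs] /BnP [l ht]; apply/BnP.
have s1 := Bnk_lt hs; have s2 := Bnk_ge hs.
have t1 := Bnk_lt ht; have t2 := Bnk_ge ht.
have sk : s k = k by apply: s2.
exists (t (s k)); apply: Bnk_intro => i; rewrite !ffunE sk.
- case: (leqP l k) => lk.
  + rewrite (t2 k lk) => il.
    have isi : (i < s i)%N by apply: s1; lia.
    case: (ltnP (s i) l) => hsl; first by have := t1 _ hsl; lia.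
    by rewrite t2 //.
  + have tk := t1 k lk => ic.
    case: (ltnP i k) => ik.
      have isi := s1 _ ik.
      case: (ltnP (s i) l) => hsl; first by have := t1 _ hsl; lia.
      by rewrite t2 //; lia.
    by rewrite s2.
- case: (leqP l k) => lk.
  + rewrite (t2 k lk) => il.
    case: (ltnP i k) => ik; last by rewrite s2 // t2.
    by rewrite t2 //; have := s1 _ ik; lia.
  + have tk := t1 k lk => ic.
    by rewrite s2 //; lia.
Qed.

Lemma part2 t : t \in Bn n -> ~ permutational t.
Proof.
move=> /BnP [k ht] [X [cX inv inj sur]].
have X0 : (0 < #|X|)%N by lia.
have [x0 x0X] : exists x0, x0 \in X by move/card_gt0P: X0 => [x h]; exists x.
case: (arg_minnP (fun x : 'I_n => val x) x0X) => m mX mmin.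
have [y yX ty] := sur m mX.
have my := mmin y yX; rewrite /= in my.
have yk : (k <= y)%N.
  rewrite leqNgt; apply/negP => yk; have := Bnk_lt ht yk; rewrite ty; lia.
have mk : m = k by rewrite -ty (Bnk_ge ht).
have [z zX zk] : exists2 z, z \in X & z != k.
  have : (0 < #|X :\ k|)%N.
    move: cX; rewrite (cardsD1 k X) -mk.
    have -> : (m \in X) = true by exact: mX.
    by rewrite /= add1n ltnS.
  move/card_gt0P => [z]; rewrite !inE => /andP [zk zX]; by exists z.
have kz : (k <= z)%N by rewrite -mk; exact: (mmin z zX).
have mX' : m \in X by exact: mX.
have := inj z k zX; rewrite -mk mX' (Bnk_ge ht) // mk (Bnk_ge ht) // => /(_ isT erefl) zk'.
by move/eqP: zk; rewrite zk'.
Qed.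


Lemma two_fix_perm u (a b : 'I_n) : a != b -> u a = a -> u b = b -> permutational u.
Proof.
move=> ab ua ub; exists [set a; b]; split.
- by rewrite cards2 ab.
- by move=> x; rewrite !inE => /orP [] /eqP ->; rewrite ?ua ?ub eqxx ?orbT.
- move=> x y; rewrite !inE => /orP [] /eqP -> /orP [] /eqP ->; rewrite ?ua ?ub //.
- by move=> y hy; exists y => //; move: hy; rewrite !inE => /orP [] /eqP ->.
Qed.

Lemma np_fix t (a b : 'I_n) : ~ permutational t -> t a = a -> t b = b -> a = b.
Proof.
move=> np ta tb; apply/eqP; apply/negPn/negP => ab.
by apply: np; exact: (two_fix_perm ab ta tb).
Qed.

Lemma np_orbit t (y : 'I_n) : ~ permutational t ->
  exists m, t (iter m t y) = iter m t y.
Proof.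
move=> np.
pose f (k : 'I_n.+1) := iter k t y.
have [a [b ab fab]] : exists a, exists2 b, a != b & f a = f b.
  apply/injectivePn; apply/negP => /injectiveP inj.
  by have := leq_card f inj; rewrite !card_ord ltnn.
wlog lab : a b ab fab / (a < b)%N.
  move=> W; case: (ltngtP a b) => h; first exact: (W a b).
  - by apply: (W b a) => //; rewrite eq_sym.
  - by move/eqP: ab; case; apply: val_inj.
exists a.
set z := iter a t y.
set p := (b - a)%N.
have p0 : (0 < p)%N by rewrite subn_gt0.
have zp : iter p t z = z by rewrite /z -iterD subnK ?(ltnW lab) //; exact: esym fab.
case: (eqVneq (t z) z) => // tzz; exfalso; apply: np.
pose X := [set iter (val k) t z | k : 'I_p].
have XP x : reflect (exists2 k, (k < p)%N & x = iter k t z) (x \in X).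
  apply: (iffP imsetP) => [[k _ ->]|[k kp ->]]; first by exists k.
  by exists (Ordinal kp).
have inv x : x \in X -> t x \in X.
  move/XP => [k kp ->]; apply/XP; rewrite -iterS.
  case: (ltngtP k.+1 p) => h; first by exists k.+1.
  - lia.
  - by exists 0%N => //; rewrite h zp.
have sur x : x \in X -> exists2 w, w \in X & t w = x.
  move/XP => [k kp ->]; case: k kp => [|k] kp.
    exists (iter p.-1 t z); first by apply/XP; exists p.-1 => //; lia.
    by rewrite -iterS prednK // zp.
  by exists (iter k t z); [apply/XP; exists k => //; lia | rewrite -iterS].
have eqX : t @: X = X.
  apply/setP => x; apply/imsetP/idP => [[w wX ->]|/sur [w wX <-]].
    exact: inv.
  by exists w.
have inj : {in X &, injective t} by apply/imset_injP; rewrite eqX.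
have zX : z \in X by apply/XP; exists 0%N.
have tzX := inv z zX.
exists X; split => //.
have : #|[set z; t z]| <= #|X|.
  by apply: subset_leq_card; apply/fintype.subsetP => x; rewrite !inE => /orP [] /eqP ->.
by rewrite cards2 eq_sym tzz.
Qed.

Lemma cross t (c : nat) m (y : 'I_n) : (c <= y)%N -> (iter m t y < c)%N ->
  exists z : 'I_n, (c <= z)%N /\ (t z < c)%N.
Proof.
elim: m y => [|m IH] y cy; first by rewrite /=; lia.
rewrite iterSr => h.
case: (ltnP (t y) c) => tyc; first by exists y.
exact: IH tyc h.
Qed.

Lemma inS t s : s \in Bn n -> sgen (t |: Bn n) s.
Proof. by move=> h; apply: sgen_base; rewrite !inE h orbT. Qed.

Lemma inT t : sgen (t |: Bn n) t.
Proof. by apply: sgen_base; rewrite !inE eqxx. Qed.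

Lemma C2 t (x1 x2 : 'I_n) : (t x1 < x1)%N -> (t x1 < x2)%N -> (x2 <= t x2)%N ->
  exists u, sgen (t |: Bn n) u /\ permutational u.
Proof.
move=> d1 d2 d3.
pose s : transf n := [ffun y => if y == t x1 then x1 else x2].
have sB : s \in Bn n.
  apply/BnP; exists x2; apply: Bnk_intro => i; rewrite ffunE.
  - by case: eqP => [->|]; lia.
  - by case: eqP => [-> h|]; first (exfalso; lia).
exists (tmul t s); split; first exact: sgen_mul (inT t) (inS t sB).
have ne : t x2 != t x1 by apply/eqP => /(congr1 (@nat_of_ord n)) h; lia.
apply: (@two_fix_perm _ x1 x2).
- by apply/eqP => h; move: d1; rewrite h; lia.
- by rewrite ffunE /s ffunE eqxx.
- by rewrite ffunE /s ffunE (negbTE ne).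
Qed.

Lemma C1 t (x1 x2 : 'I_n) : (t x1 < x1)%N -> (t x2 < x2)%N -> t x1 != t x2 ->
  exists u, sgen (t |: Bn n) u /\ permutational u.
Proof.
move=> d1 d2 ne.
pose k := if (x1 <= x2)%N then x2 else x1.
have k1 : (t x1 < k)%N by rewrite /k; case: ifP; lia.
have k2 : (t x2 < k)%N by rewrite /k; case: ifP; lia.
pose s : transf n := [ffun y => if y == t x1 then x1 else if y == t x2 then x2 else k].
have sB : s \in Bn n.
  apply/BnP; exists k; apply: Bnk_intro => i; rewrite ffunE.
  - by case: eqP => [->|] //; case: eqP => [->|] //.
  - by case: eqP => [->|]; [lia|]; case: eqP => [->|]; [lia|].
exists (tmul t s); split; first exact: sgen_mul (inT t) (inS t sB).
apply: (@two_fix_perm _ x1 x2).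
- by apply/eqP => h; move: ne; rewrite h eqxx.
- by rewrite ffunE /s ffunE eqxx.
- by rewrite ffunE /s ffunE eq_sym (negbTE ne) eqxx.
Qed.

Lemma part4 t : (1 < n)%N -> ~ permutational t -> t \notin Bn n ->
  exists u, sgen (t |: Bn n) u /\ permutational u.
Proof.
move=> hn np tnB.
have [m0 hm0] := np_orbit (Ordinal (ltnW hn)) np.
set r := iter m0 t _ in hm0.
have root y : exists m, iter m t y = r.
  have [m hm] := np_orbit y np; exists m; exact: np_fix np hm hm0.
case: (boolP [exists x, (t x < x)%N && (t x < r)%N]).
  move/existsP => [x /andP [h1 h2]]; apply: (@C2 t x r) => //; rewrite hm0 //.
move/existsPn => H.
have H' x : (t x < x)%N -> (r <= t x)%N.
  by move=> h; have := H x; rewrite h /= -leqNgt.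
have : t \notin Bnk r by apply: contra tnB => h; apply/BnP; exists r.
rewrite inE => /forallPn [i]; case: ifP => ir.
  rewrite -leqNgt => tii; exfalso.
  case: (eqVneq (t i) i) => e.
    by have := np_fix np e hm0 => ei; move: ir; rewrite ei ltnn.
  have : (t i < i)%N by rewrite ltn_neqAle e tii.
  move/H'; lia.
move=> tir.
have ri : (r <= i)%N by rewrite leqNgt ir.
have ine : i != r by apply/eqP => e; move: tir; rewrite e hm0 eqxx.
have tine : t i != i by apply/eqP => e; move/eqP: ine; apply; exact: np_fix np e hm0.
have ri' : (r < i)%N by rewrite ltn_neqAle ri andbT eq_sym; move: ine; apply: contra => /eqP h; apply/eqP/val_inj.
case: (ltngtP (t i) i) => c.
- have rj := H' _ c.
  have rj' : (r < t i)%N.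
    by rewrite ltn_neqAle rj andbT eq_sym; move: tir; apply: contra => /eqP h; apply/eqP/val_inj.
  have [m hm] := root (t i).
  have := @cross t (t i) m (t i) (leqnn _); rewrite hm => /(_ rj') [z [zj tz]].
  apply: (@C1 t i z) => //; first lia.
  by apply/eqP => h; move: tz; rewrite -h ltnn.
- have [m hm] := root i.
  have := @cross t i m i (leqnn _); rewrite hm => /(_ ri') [z [zi tz]].
  apply: (@C2 t z i) => //; [lia | exact: ltnW].
- by move: tine; rewrite (val_inj c) eqxx.
Qed.

End Comb.
Section P3.
Local Open Scope ring_scope.
Section E.
Variable R : realType.

Notation s := (series (exp_coeff (1:R))).

Lemma s_nd : nondecreasing_seq s.
Proof.
apply/nondecreasing_seqP => k; rewrite /series /= big_nat_recr //=.
by rewrite lerDl exp_coeff_ge0.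
Qed.

Lemma sS k : s k.+1 = s k + (k`!%:R)^-1.
Proof. by rewrite /series /= big_nat_recr //= /exp_coeff /= expr1n mul1r. Qed.

Lemma e_lb m : s m <= expR 1.
Proof. exact: (nondecreasing_cvgn_le s_nd (is_cvg_series_exp_coeff _)). Qed.

Lemma tail_bound m : (0 < m)%N -> forall k,
  s (m.+1 + k)%N + (3/2) * ((m.+1 + k)`!%:R)^-1 <= s m.+1 + (3/2) * (m.+1`!%:R)^-1.
Proof.
move=> m0; elim=> [|k IH]; first by rewrite addn0.
apply: le_trans IH; rewrite addnS sS -addrA lerD2l.
rewrite factS natrM invfM.
set a := ((m.+1 + k)`!%:R)^-1 : R.
have a0 : 0 <= a by rewrite invr_ge0.
have h : ((m.+1+k).+1%:R)^-1 <= (3:R)^-1.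
  rewrite lef_pV2 ?posrE ?ltr0n // ler_nat. 
  lia.
set b := _^-1 in h *.
have b0 : 0 <= b by rewrite invr_ge0.
have : b * a <= 3^-1 * a by rewrite ler_wpM2r.
lra.
Qed.

Lemma e_ub m : (0 < m)%N -> expR 1 < s m.+1 + (m`!%:R)^-1.
Proof.
move=> m0.
have H : expR 1 <= s m.+1 + (3/2) * (m.+1`!%:R)^-1.
  rewrite /expR; apply: limr_le; first exact: is_cvg_series_exp_coeff.
  near=> N.
  have hN : (m.+1 <= N)%N by near: N; exists m.+1.
  rewrite -(subnKC hN).
  have T := tail_bound m0 (N - m.+1).
  have : 0 <= (3/2 : R) * ((m.+1 + (N - m.+1))`!%:R)^-1 by rewrite mulr_ge0 // invr_ge0.
  lra.
apply: (le_lt_trans H); rewrite ltrD2l factS natrM invfM.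
have f0 : 0 < (m`!%:R : R)^-1 by rewrite invr_gt0 ltr0n fact_gt0.
have h : (m.+1%:R : R)^-1 <= 2^-1.
  by rewrite lef_pV2 ?posrE ?ltr0n // ler_nat ltnS.
set b := (m.+1%:R : R)^-1 in h *.
set a := (m`!%:R : R)^-1 in f0 *.
have : b * a <= 2^-1 * a by rewrite ler_wpM2r // ltW.
lra.
Unshelve. all: by end_near.
Qed.
End E.


Lemma sum_ffact_R (R : realType) m :
  (\sum_(k < m.+1) m ^_ k)%N%:R = m`!%:R * series (exp_coeff (1:R)) m.+1.
Proof.
rewrite /series /= big_rev_mkord subn0 natr_sum mulr_sumr.
apply: eq_bigr => i _.
have im : (i <= m)%N by rewrite -ltnS ltn_ord.
have := ffact_fact im => E.
rewrite /exp_coeff /= expr1n mul1r subSS -E natrM mulfK // pnatr_eq0 -lt0n fact_gt0.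
Qed.

Lemma part3 (R : realType) n (hn : (1 < n)%N) :
  (#|Bn n|%:Z = Num.floor (expR (1 : R) * ((n.-1)`!)%:R))%R.
Proof.
rewrite card_Bn; case: n hn => [//|m] hm /=.
have m0 : (0 < m)%N by [].
apply/esym/floor_def.
set T := (\sum_(k < m.+1) m ^_ k)%N.
have e1 : ((T%:Z)%:~R : R) = T%:R by [].
have e2 : (((T%:Z) + 1)%:~R : R) = T%:R + 1 by rewrite intrD.
rewrite e1 e2 /T sum_ffact_R.
have lb := e_lb R m.+1.
have ub := e_ub R m0.
have f0 : (0 : R) < m`!%:R by rewrite ltr0n fact_gt0.
have fi : (m`!%:R : R) * (m`!%:R)^-1 = 1 by rewrite mulfV // gt_eqF.
set f := (m`!%:R : R) in f0 fi *.
set g := f^-1 in ub fi.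
set x := series _ _ in lb ub *.
set e := expR 1 in lb ub *.
apply/andP; split; nra.
Qed.
End P3.
End Aux.

Theorem theorem4 (R : realType) (n : nat) (hn : (1 < n)%N) :
  [/\ (forall s t : transf n, s \in Bn n -> t \in Bn n -> tmul s t \in Bn n),
      (forall t : transf n, t \in Bn n -> ~ permutational t),
      (#|Bn n|%:Z = Num.floor (expR (1 : R) * ((n.-1)`!)%:R))%R
    & (forall t : transf n, ~ permutational t -> t \notin Bn n ->
         exists u, sgen (t |: Bn n) u /\ permutational u)].
Proof.
split.
- exact: Aux.part1.
- exact: Aux.part2.
- exact: Aux.part3.
- by move=> t; apply: Aux.part4.
Qed.
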